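(* Let $f$ be an equivariant function between sets of strings over polynomial orbit-finite alphabets. If for some tuple of atoms $\bar a$ the function $f$ is a composition of $\bar a$-primes, then $f$ is a composition of primes.
   Context: Atoms $\mathbb A$ are a countably infinite set; atom automorphisms are bijections of $\mathbb A$; polynomial orbit-finite sets are built from $\mathbb A$ and singletons by finite products and disjoint unions. A function is $\bar a$-supported if $\pi\circ f\circ\pi^{-1}=f$ for every automorphism $\pi$ fixing $\bar a$ pointwise; equivariant means supported by the empty tuple. Compositions of $\bar a$-primes: the smallest class of functions containing (i) length-preserving homomorphisms obtained by lifting letterwise an $\bar a$-supported function $\Sigma\to\Gamma$ between polynomial orbit-finite sets, (ii) functions computed by classical Mealy machines (finite alphabets, finite states, deterministic transition $Q\times\Sigma\to Q\times\Gamma$ outputting one letter per input letter), (iii) atom propagation $(\mathbb A+\{\epsilon,\downarrow\})^*\to(\mathbb A+\bot)^*$ (position $i$ outputs the atom of position $j$ if $i$ is labelled $\downarrow$, $j<i$ carries an atom and all positions strictly between are labelled $\epsilon$; otherwise $\bot$), closed under sequential composition and parallel composition $f_1|f_2:(\Sigma_1\times\Sigma_2)^*\to(\Gamma_1\times\Gamma_2)^*$ (apply $f_i$ to the $i$-th projection). Compositions of primes are compositions of $\bar a$-primes for $\bar a$ the empty tuple (i.e. with equivariant homomorphisms). *)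

(* Defs.v *)
From mathcomp Require Import all_boot.
Set Implicit Arguments. Unset Strict Implicit. Unset Printing Implicit Defensive.

Definition atom := nat.

(** Atom automorphisms: bijections of the atoms (not necessarily finitary). *)
Record aut := Aut { aut_fun : atom -> atom; aut_inv : atom -> atom;
                    aut_K : cancel aut_fun aut_inv; aut_Ki : cancel aut_inv aut_fun }.

(** Codes for polynomial orbit-finite sets: built from A and singletons by
    finite products and disjoint unions. *)
Inductive pof := PAtom | PUnit | PProd of pof & pof | PSum of pof & pof.

Fixpoint pof_ty (S : pof) : Type :=
  match S with
  | PAtom => atom
  | PUnit => unit
  | PProd A B => (pof_ty A * pof_ty B)%type
  | PSum A B => (pof_ty A + pof_ty B)%type
  end.

Fixpoint pact (g : atom -> atom) (S : pof) : pof_ty S -> pof_ty S :=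
  match S return pof_ty S -> pof_ty S with
  | PAtom => fun a => g a
  | PUnit => fun u => u
  | PProd A B => fun p => (@pact g A p.1, @pact g B p.2)
  | PSum A B => fun s => match s with inl x => inl (@pact g A x) | inr y => inr (@pact g B y) end
  end.

Definition supported (abar : seq atom) (S G : pof) (h : pof_ty S -> pof_ty G) : Prop :=
  forall pi : aut, (forall a, a \in abar -> aut_fun pi a = a) ->
    forall x, @pact (aut_fun pi) G (h (@pact (aut_inv pi) S x)) = h x.

Definition equivariant_str (S G : pof) (f : seq (pof_ty S) -> seq (pof_ty G)) : Prop :=
  forall pi : aut, forall w,
    map (@pact (aut_fun pi) G) (f (map (@pact (aut_inv pi) S) w)) = f w.

(** Finite (atom-free) alphabets. *)
Fixpoint atomless (S : pof) : bool :=
  match S with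
  | PAtom => false
  | PUnit => true
  | PProd A B | PSum A B => atomless A && atomless B
  end.

Fixpoint mealy_run (Q X Y : Type) (delta : Q -> X -> Q * Y) (q : Q) (w : seq X) : seq Y :=
  match w with
  | [::] => [::]
  | x :: w' => let: (q', y) := delta q x in y :: mealy_run delta q' w'
  end.

(** Atom propagation. Input alphabet A + {eps, down}: inl a = atom a,
    inr (inl tt) = eps, inr (inr tt) = down. Output alphabet A + {bot}. *)
Definition prop_in := PSum PAtom (PSum PUnit PUnit).
Definition prop_out := PSum PAtom PUnit.

(** Given the reversed prefix before position i, find the nearest letter that is not eps. *)
Fixpoint last_non_eps (rp : seq (pof_ty prop_in)) : option (pof_ty prop_in) :=
  match rp with
  | [::] => None
  | inr (inl _) :: rp' => last_non_eps rp'
  | x :: _ => Some x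
  end.

Definition prop_letter (w : seq (pof_ty prop_in)) (i : nat) (x : pof_ty prop_in)
  : pof_ty prop_out :=
  match x with
  | inr (inr _) =>
      match last_non_eps (rev (take i w)) with
      | Some (inl a) => inl a
      | _ => inr tt
      end
  | _ => inr tt
  end.

Definition atom_propagation (w : seq (pof_ty prop_in)) : seq (pof_ty prop_out) :=
  [seq prop_letter w i x | '(i, x) <- zip (iota 0 (size w)) w].

Inductive comp_primes (abar : seq atom) :
  forall S G : pof, (seq (pof_ty S) -> seq (pof_ty G)) -> Prop :=
  | CP_hom S G (h : pof_ty S -> pof_ty G) :
      supported abar h -> comp_primes abar (map h)
  | CP_mealy S G (Q : finType) (q0 : Q) (delta : Q -> pof_ty S -> Q * pof_ty G) :
      atomless S -> atomless G -> comp_primes abar (mealy_run delta q0)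
  | CP_prop : @comp_primes abar prop_in prop_out atom_propagation
  | CP_seq S D G (f : seq (pof_ty S) -> seq (pof_ty D)) (g : seq (pof_ty D) -> seq (pof_ty G)) :
      comp_primes abar f -> comp_primes abar g -> comp_primes abar (fun w => g (f w))
  | CP_par S1 S2 G1 G2 (f1 : seq (pof_ty S1) -> seq (pof_ty G1))
      (f2 : seq (pof_ty S2) -> seq (pof_ty G2)) :
      comp_primes abar f1 -> comp_primes abar f2 ->
      @comp_primes abar (PProd S1 S2) (PProd G1 G2)
        (fun w => zip (f1 (unzip1 w)) (f2 (unzip2 w))).

(* Main.v *)
Require Import Defs.
From mathcomp Require Import all_boot.
From Stdlib Require Import FunctionalExtensionality.
Set Implicit Arguments. Unset Strict Implicit. Unset Printing Implicit Defensive.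


Fixpoint atoms (S : pof) : pof_ty S -> seq atom :=
  match S return pof_ty S -> seq atom with
  | PAtom => fun a => [:: a]
  | PUnit => fun _ => [::]
  | PProd A B => fun p => atoms p.1 ++ atoms p.2
  | PSum A B => fun s => match s with inl x => atoms x | inr y => atoms y end
  end.

Lemma pact_ext (g g' : atom -> atom) S (x : pof_ty S) :
  (forall a, a \in atoms x -> g a = g' a) -> pact g x = pact g' x.
Proof.
elim: S x => [a|u|A IHA B IHB [x y]|A IHA B IHB [x|y]] /= H.
- by apply: H; rewrite inE.
- by [].
- by rewrite (IHA x) ?(IHB y) // => a Ha; apply: H; rewrite mem_cat Ha ?orbT.
- by rewrite (IHA x).
- by rewrite (IHB y).
Qed.

Lemma pact_comp (g g' : atom -> atom) S (x : pof_ty S) :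
  pact g (pact g' x) = pact (g \o g') x.
Proof.
elim: S x => [a|u|A IHA B IHB [x y]|A IHA B IHB [x|y]] //=.
- by rewrite IHA IHB.
- by rewrite IHA.
- by rewrite IHB.
Qed.

Lemma pact_id (g : atom -> atom) S (x : pof_ty S) :
  (forall a, g a = a) -> pact g x = x.
Proof.
move=> H; elim: S x => [a|u|A IHA B IHB [x y]|A IHA B IHB [x|y]] //=.
- by rewrite IHA IHB.
- by rewrite IHA.
- by rewrite IHB.
Qed.

Lemma atoms_pact (g : atom -> atom) S (x : pof_ty S) :
  atoms (pact g x) = map g (atoms x).
Proof.
elim: S x => [a|u|A IHA B IHB [x y]|A IHA B IHB [x|y]] //=.
by rewrite IHA IHB map_cat.
Qed.

Lemma pact_atomless (g : atom -> atom) S (x : pof_ty S) :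
  atomless S -> pact g x = x.
Proof.
elim: S x => [a|u|A IHA B IHB [x y]|A IHA B IHB [x|y]] //= /andP[hA hB].
- by rewrite IHA ?IHB.
- by rewrite IHA.
- by rewrite IHB.
Qed.

Definition aut_comp (p r : aut) : aut.
Proof.
refine (@Aut (aut_fun p \o aut_fun r) (aut_inv r \o aut_inv p) _ _).
- by move=> x /=; rewrite aut_K aut_K.
- by move=> x /=; rewrite aut_Ki aut_Ki.
Defined.

Definition aut_invol (g : atom -> atom) (H : involutive g) : aut := @Aut g g H H.

Definition swapf (a c : atom) (n : atom) : atom :=
  if n == a then c else if n == c then a else n.
Lemma swapf_inv a c : involutive (swapf a c).
Proof.
move=> n; rewrite /swapf.
case: (eqVneq n a) => [->|na]; first by rewrite eqxx; case: eqVneq.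
case: (eqVneq n c) => [->|nc]; first by rewrite eqxx.
by rewrite (negbTE na) (negbTE nc).
Qed.

Definition blockf (M n : nat) : nat :=
  if n < M then n + M else if n < M + M then n - M else n.
Lemma blockf_inv M : involutive (blockf M).
Proof.
move=> n; rewrite /blockf.
case: (ltnP n M) => h1.
  have -> : (n + M < M) = false by apply/negbTE; rewrite -leqNgt leq_addl.
  have -> : n + M < M + M by rewrite ltn_add2r.
  by rewrite addnK.
case: (ltnP n (M + M)) => h2.
  have -> : n - M < M by rewrite ltn_subLR.
  by rewrite subnK.
by rewrite ltnNge h1 /= ltnNge h2.
Qed.

Fixpoint maxl (s : seq nat) : nat := if s is x :: s' then maxn x (maxl s') else 0.
Lemma maxl_ge s a : a \in s -> a <= maxl s.
Proof.
elim: s => //= x s IH; rewrite inE => /orP[/eqP->|h]; first by rewrite leq_maxl.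
by rewrite (leq_trans (IH h)) // leq_maxr.
Qed.

Lemma atoms_atomless S (x : pof_ty S) : atomless S -> atoms x = [::].
Proof.
elim: S x => [a|u|A IHA B IHB [x y]|A IHA B IHB [x|y]] //= /andP[hA hB].
- by rewrite IHA ?IHB.
- by rewrite IHA.
- by rewrite IHB.
Qed.

Fixpoint Tg (n : nat) : pof := if n is n'.+1 then PSum PUnit (Tg n') else PUnit.
Fixpoint tg_of (n : nat) : nat -> pof_ty (Tg n) :=
  match n return nat -> pof_ty (Tg n) with
  | 0 => fun _ => tt
  | n'.+1 => fun j => if j is j'.+1 then inr (tg_of n' j') else inl tt
  end.
Fixpoint nat_of_tg (n : nat) : pof_ty (Tg n) -> nat :=
  match n return pof_ty (Tg n) -> nat with
  | 0 => fun _ => 0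
  | n'.+1 => fun t => match t with inl _ => 0 | inr t' => (nat_of_tg t').+1 end
  end.
Lemma nat_of_tgK n j : j <= n -> nat_of_tg (tg_of n j) = j.
Proof. elim: n j => [|n IH] [|j] //= h. by rewrite IH. Qed.
Lemma tg_ofK n t : tg_of n (nat_of_tg t) = t.
Proof. elim: n t => [|n IH] t /=; first by case: t. case: t => [[]|t] //=; by rewrite IH. Qed.
Lemma nat_of_tg_le n t : @nat_of_tg n t <= n.
Proof. elim: n t => [//|n IH] [[]|t] //=. by rewrite ltnS. Qed.
Lemma atomless_Tg n : atomless (Tg n).
Proof. by elim: n. Qed.

Fixpoint T (n : nat) (S : pof) : pof :=
  match S with
  | PAtom => PSum PAtom (Tg n)
  | PUnit => PUnit
  | PProd A B => PProd (T n A) (T n B)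
  | PSum A B => PSum (T n A) (T n B)
  end.

Lemma atomless_T n S : atomless (T n S) = atomless S.
Proof. by elim: S => //= A -> B ->. Qed.

Section Enc.
Variable ab : seq atom.
Local Notation k := (size ab).

Fixpoint enc (S : pof) : pof_ty S -> pof_ty (T k S) :=
  match S return pof_ty S -> pof_ty (T k S) with
  | PAtom => fun a => if a \in ab then inr (tg_of k (index a ab)) else inl a
  | PUnit => fun u => u
  | PProd A B => fun p => (enc p.1, enc p.2)
  | PSum A B => fun s => match s with inl x => inl (enc x) | inr y => inr (enc y) end
  end.

Fixpoint dec (S : pof) : pof_ty (T k S) -> pof_ty S :=
  match S return pof_ty (T k S) -> pof_ty S with
  | PAtom => fun y => match y with inl a => a | inr t => nth (head 0 ab) ab (nat_of_tg t) end
  | PUnit => fun u => u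
  | PProd A B => fun p => (dec p.1, dec p.2)
  | PSum A B => fun s => match s with inl x => inl (dec x) | inr y => inr (dec y) end
  end.

Lemma decK S (x : pof_ty S) : dec (enc x) = x.
Proof.
elim: S x => [a|u|A IHA B IHB [x y]|A IHA B IHB [x|y]] /=.
- case: ifP => // h; rewrite nat_of_tgK ?nth_index //.
  by apply: ltnW; rewrite index_mem.
- by [].
- by rewrite IHA IHB.
- by rewrite IHA.
- by rewrite IHB.
Qed.

Lemma encK_atomless S (y : pof_ty (T k S)) : atomless S -> enc (dec y) = y.
Proof.
elim: S y => [a|u|A IHA B IHB [x y]|A IHA B IHB [x|y]] //= /andP[hA hB].
- by rewrite IHA ?IHB.
- by rewrite IHA.
- by rewrite IHB.
Qed.

Lemma atoms_enc S (x : pof_ty S) a : a \in atoms (enc x) -> (a \in atoms x) && (a \notin ab).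
Proof.
elim: S x => [b|u|A IHA B IHB [x y]|A IHA B IHB [x|y]] //=.
- case: ifP => hb /=; first by rewrite atoms_atomless ?atomless_Tg.
  by rewrite !inE => /eqP->; rewrite eqxx hb.
- rewrite !mem_cat => /orP[/IHA/andP[-> ->]|/IHB/andP[-> ->]] //; by rewrite orbT.
- exact: IHA.
- exact: IHB.
Qed.

Lemma atoms_dec S (y : pof_ty (T k S)) a : 0 < k ->
  a \in atoms (dec y) -> (a \in atoms y) || (a \in ab).
Proof.
move=> k0.
elim: S y => [[b|t]|u|A IHA B IHB [x y]|A IHA B IHB [x|y]] //=.
- by move=> ->.
- rewrite inE => /eqP->; rewrite orbC.
  case: (ltnP (nat_of_tg t) k) => h; first by rewrite mem_nth.
  have hh : head 0 ab \in ab by move: k0; case: (ab) => //= b s _; rewrite inE eqxx.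
  by rewrite nth_default // hh.
- rewrite !mem_cat => /orP[/IHA/orP[->|->]|/IHB/orP[->|->]] //; by rewrite ?orbT.
- exact: IHA.
- exact: IHB.
Qed.
End Enc.

Lemma pact_Tg g n (t : pof_ty (Tg n)) : pact g t = t.
Proof. by rewrite pact_atomless ?atomless_Tg. Qed.

Section Enc2.
Variable ab : seq atom.
Local Notation k := (size ab).

Lemma dec_pact g S (y : pof_ty (T k S)) : 0 < k ->
  (forall a, a \in ab -> g a = a) -> dec (ab:=ab) (pact g y) = pact g (dec (ab:=ab) y).
Proof.
move=> k0 H.
elim: S y => [[b|t]|u|A IHA B IHB [x y]|A IHA B IHB [x|y]] //=.
- rewrite pact_Tg.
  case: (ltnP (nat_of_tg t) k) => h; first by rewrite H // mem_nth.
  rewrite nth_default //.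
  have hh : head 0 ab \in ab by move: k0; case: (ab) => //= b s _; rewrite inE eqxx.
  by rewrite H.
- by rewrite IHA IHB.
- by rewrite IHA.
- by rewrite IHB.
Qed.

Lemma enc_pact g S (x : pof_ty S) :
  (forall a, a \in ab -> g a = a) -> (forall a, (g a \in ab) = (a \in ab)) ->
  enc ab (pact g x) = pact g (enc ab x).
Proof.
move=> H1 H2.
elim: S x => [a|u|A IHA B IHB [x y]|A IHA B IHB [x|y]] //=.
- rewrite H2; case: ifP => // h. by rewrite pact_Tg H1.
- by rewrite IHA IHB.
- by rewrite IHA.
- by rewrite IHB.
Qed.
End Enc2.

Fixpoint embed n (S : pof) : pof_ty S -> pof_ty (T n S) :=
  match S return pof_ty S -> pof_ty (T n S) with
  | PAtom => fun a => inl a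
  | PUnit => fun u => u
  | PProd A B => fun p => (embed n p.1, embed n p.2)
  | PSum A B => fun s => match s with inl x => inl (embed n x) | inr y => inr (embed n y) end
  end.

Fixpoint unembed n (S : pof) : pof_ty (T n S) -> option (pof_ty S) :=
  match S return pof_ty (T n S) -> option (pof_ty S) with
  | PAtom => fun y => match y with inl a => Some a | inr _ => None end
  | PUnit => fun u => Some u
  | PProd A B => fun p => match unembed p.1, unembed p.2 with
                          | Some x, Some y => Some (x, y) | _, _ => None end
  | PSum A B => fun s => match s with inl x => omap inl (unembed x)
                                    | inr y => omap inr (unembed y) end
  end.

Lemma embedK n S (x : pof_ty S) : unembed (embed n x) = Some x.
Proof.
elim: S x => [a|u|A IHA B IHB [x y]|A IHA B IHB [x|y]] //=.
- by rewrite IHA IHB.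
- by rewrite IHA.
- by rewrite IHB.
Qed.

Lemma embed_pact n g S (x : pof_ty S) : embed n (pact g x) = pact g (embed n x).
Proof.
elim: S x => [a|u|A IHA B IHB [x y]|A IHA B IHB [x|y]] //=.
- by rewrite IHA IHB.
- by rewrite IHA.
- by rewrite IHB.
Qed.

Lemma unembed_pact n g S (y : pof_ty (T n S)) :
  unembed (pact g y) = omap (@pact g S) (unembed y).
Proof.
elim: S y => [[a|t]|u|A IHA B IHB [x y]|A IHA B IHB [x|y]] //=.
- rewrite IHA IHB. by case: (unembed x) => [?|]; case: (unembed y).
- rewrite IHA. by case: (unembed x).
- rewrite IHB. by case: (unembed y).
Qed.

Lemma enc_embed ab S (x : pof_ty S) :
  (forall a, a \in atoms x -> a \notin ab) -> enc ab x = embed (size ab) x.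
Proof.
elim: S x => [a|u|A IHA B IHB [x y]|A IHA B IHB [x|y]] //= H.
- by move: (H a); rewrite inE eqxx => /(_ isT) /negbTE ->.
- rewrite IHA ?IHB // => a h; apply: H; by rewrite mem_cat h ?orbT.
- by rewrite IHA.
- by rewrite IHB.
Qed.

Lemma maxl_lt s a c : a \in s -> maxl s < c -> a != c.
Proof. move=> /maxl_ge h1 h2; apply/negP => /eqP E; subst; by rewrite ltnNge h1 in h2. Qed.

Definition aut_id : aut := @Aut id id (fun _ => erefl) (fun _ => erefl).

Lemma aut_fix_iff (r : aut) (ab : seq atom) :
  (forall a, a \in ab -> aut_fun r a = a) -> forall a, (aut_fun r a \in ab) = (a \in ab).
Proof.
move=> H a; apply/idP/idP => h; last by rewrite H.
have E : aut_fun r (aut_fun r a) = aut_fun r a by rewrite H.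
have : aut_inv r (aut_fun r (aut_fun r a)) = aut_inv r (aut_fun r a) by rewrite E.
by rewrite !aut_K => <-.
Qed.

Lemma aut_fix_inv (r : aut) (ab : seq atom) :
  (forall a, a \in ab -> aut_fun r a = a) -> forall a, a \in ab -> aut_inv r a = a.
Proof. move=> H a h. by rewrite -{1}(H a h) aut_K. Qed.

Section Hom.
Variables (ab : seq atom) (S G : pof) (h : pof_ty S -> pof_ty G).
Hypothesis k0 : 0 < size ab.
Hypothesis Hh : supported ab h.
Local Notation k := (size ab).

Lemma support_h x a : a \in atoms (h x) -> (a \in atoms x) || (a \in ab).
Proof.
move=> ha; apply/negPn/negP; rewrite negb_or => /andP[nx nab].
set c := (maxl (atoms x ++ ab ++ atoms (h x))).+1.
have cx : forall b, b \in atoms x -> b != c.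
  by move=> b hb; apply: (maxl_lt (s := atoms x ++ ab ++ atoms (h x))); rewrite ?mem_cat ?hb.
have cab : forall b, b \in ab -> b != c.
  by move=> b hb; apply: (maxl_lt (s := atoms x ++ ab ++ atoms (h x))); rewrite ?mem_cat ?hb ?orbT.
have chx : c \notin atoms (h x).
  apply/negP => hb.
  by move: (maxl_lt (s := atoms x ++ ab ++ atoms (h x)) (a := c) (c := c)); rewrite !mem_cat hb !orbT eqxx => /(_ isT (ltnSn _)).
pose sw := aut_invol (swapf_inv a c).
have fix_ab : forall b, b \in ab -> aut_fun sw b = b.
  move=> b hb /=; rewrite /swapf.
  have -> : (b == a) = false by apply/negbTE; apply: contraNneq nab => <-.
  by rewrite (negbTE (cab b hb)).
have := Hh fix_ab x.
have -> : pact (aut_inv sw) x = x.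
  rewrite (@pact_ext _ id) ?pact_id // => b hb /=; rewrite /swapf.
  have -> : (b == a) = false by apply/negbTE; apply: contraNneq nx => <-.
  by rewrite (negbTE (cx b hb)).
move=> E.
have : c \in atoms (pact (aut_fun sw) (h x)).
  rewrite atoms_pact; apply/mapP; exists a => //=. by rewrite /swapf eqxx.
by rewrite E (negbTE chx).
Qed.

Definition V (y : pof_ty (T k S)) (p : aut) : pof_ty (T k G) :=
  pact (aut_fun p) (enc ab (h (dec (ab:=ab) (pact (aut_inv p) y)))).

Definition valid (y : pof_ty (T k S)) (p : aut) :=
  forall a, a \in atoms (pact (aut_inv p) y) -> a \notin ab.

Lemma V_coset y p (r : aut) : (forall a, a \in ab -> aut_fun r a = a) ->
  V y (aut_comp p r) = V y p.
Proof.
move=> Hr; rewrite /V /=.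
rewrite -pact_comp -(pact_comp (aut_inv r)).
rewrite dec_pact //; last exact: aut_fix_inv.
rewrite -(enc_pact _ Hr (aut_fix_iff Hr)).
by rewrite Hh.
Qed.

Lemma V_agree y p q : (forall a, a \in atoms y -> aut_inv p a = aut_inv q a) ->
  V y p = V y q.
Proof.
move=> H; rewrite /V.
have -> : pact (aut_inv p) y = pact (aut_inv q) y by apply: pact_ext.
apply: pact_ext => b /atoms_enc /andP[hb nb].
have := support_h hb; rewrite (negbTE nb) orbF => /(atoms_dec k0).
rewrite (negbTE nb) orbF atoms_pact => /mapP[a ha ->].
by rewrite aut_Ki -H // aut_Ki.
Qed.

Lemma V_disj y p q : valid y p -> valid y q ->
  (forall a b, a \in atoms y -> b \in atoms y -> aut_inv p a != aut_inv q b) ->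
  V y p = V y q.
Proof.
move=> vp vq D.
pose Z1 := map (aut_inv p) (atoms y).
pose Z3 := map (aut_inv q) (atoms y).
pose rho n := if n \in Z1 then aut_inv q (aut_fun p n)
              else if n \in Z3 then aut_inv p (aut_fun q n) else n.
have nZ : forall a, a \in atoms y -> aut_inv q a \notin Z1.
  move=> a ha; apply/mapP => -[b hb E]. by move: (D b a hb ha); rewrite E eqxx.
have r1 : forall a, a \in atoms y -> rho (aut_inv p a) = aut_inv q a.
  by move=> a ha; rewrite /rho map_f // aut_Ki.
have r2 : forall a, a \in atoms y -> rho (aut_inv q a) = aut_inv p a.
  by move=> a ha; rewrite /rho (negbTE (nZ a ha)) map_f // aut_Ki.
have r3 : forall n, n \notin Z1 -> n \notin Z3 -> rho n = n.
  by move=> n h1 h3; rewrite /rho (negbTE h1) (negbTE h3).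
have rinv : involutive rho.
  move=> n.
  case h1: (n \in Z1).
    by case/mapP: h1 => a ha ->; rewrite r1 // r2.
  case h3: (n \in Z3).
    by case/mapP: h3 => a ha ->; rewrite r2 // r1.
  by rewrite !r3 ?h1 ?h3.
pose r := aut_invol rinv.
have rfix : forall a, a \in ab -> aut_fun r a = a.
  move=> a ha /=; rewrite /rho.
  have -> : (a \in Z1) = false.
    apply/negbTE/negP => hz; move: (vp a); rewrite atoms_pact hz ha => /(_ isT); done.
  have -> : (a \in Z3) = false.
    apply/negbTE/negP => hz; move: (vq a); rewrite atoms_pact hz ha => /(_ isT); done.
  done.
rewrite -(V_coset y q rfix).
apply: V_agree => a ha /=.
by rewrite r2.
Qed.

Lemma V_wd y p q : valid y p -> valid y q -> V y p = V y q.
Proof.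
move=> vp vq.
set M := (maxl (ab ++ map (aut_inv p) (atoms y) ++ map (aut_inv q) (atoms y))).+1.
pose b := aut_invol (blockf_inv M).
pose p3 := aut_comp p b.
have lt1 : forall a, a \in atoms y -> aut_inv p a < M.
  move=> a ha; rewrite ltnS maxl_ge // !mem_cat map_f ?orbT //.
have lt2 : forall a, a \in atoms y -> aut_inv q a < M.
  move=> a ha; rewrite ltnS maxl_ge // !mem_cat map_f ?orbT //.
have ge3 : forall a, a \in atoms y -> M <= aut_inv p3 a.
  move=> a ha /=; rewrite /blockf lt1 //; exact: leq_addl.
have v3 : valid y p3.
  move=> a; rewrite atoms_pact => /mapP[c hc ->]; apply/negP => hab.
  have := ge3 c hc; rewrite leqNgt ltnS maxl_ge // mem_cat hab //.
have E1 : V y p = V y p3.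
  apply: V_disj => // a c ha hc; apply/negP => /eqP E.
  by have := ge3 c hc; rewrite -E leqNgt lt1.
have E2 : V y q = V y p3.
  apply: V_disj => // a c ha hc; apply/negP => /eqP E.
  by have := ge3 c hc; rewrite -E leqNgt lt2.
by rewrite E1 E2.
Qed.

Definition beta_y (y : pof_ty (T k S)) : aut :=
  aut_invol (blockf_inv (maxl (ab ++ atoms y)).+1).

Lemma beta_valid y : valid y (beta_y y).
Proof.
move=> a; rewrite atoms_pact => /mapP[c hc ->] /=; apply/negP => hab.
have hlt : c < (maxl (ab ++ atoms y)).+1 by rewrite ltnS maxl_ge // mem_cat hc orbT.
rewrite /blockf hlt in hab.
have : c + (maxl (ab ++ atoms y)).+1 <= maxl (ab ++ atoms y) by rewrite maxl_ge // mem_cat hab.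
by rewrite leqNgt addnS ltnS leq_addl.
Qed.

Definition hT (y : pof_ty (T k S)) : pof_ty (T k G) := V y (beta_y y).

Lemma hT_enc x : hT (enc ab x) = enc ab (h x).
Proof.
rewrite /hT (@V_wd (enc ab x) _ aut_id (@beta_valid (enc ab x))).
  by rewrite /V /= !pact_id // decK.
move=> a /=; rewrite pact_id // => /atoms_enc /andP[].
done.
Qed.

Lemma hT_eqv : supported [::] hT.
Proof.
move=> s _ y; rewrite /hT.
set y0 := pact (aut_inv s) y.
have -> : pact (aut_fun s) (V y0 (beta_y y0)) = V y (aut_comp s (beta_y y0)).
  by rewrite /V /= pact_comp /y0 pact_comp.
rewrite (@V_wd y (aut_comp s (beta_y y0)) (beta_y y)) //; last exact: (@beta_valid y).
move=> a /=; rewrite -pact_comp; exact: (@beta_valid y0).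
Qed.
End Hom.

Definition upd (st : option (pof_ty prop_in)) (x : pof_ty prop_in) :=
  match x with inr (inl _) => st | _ => Some x end.
Definition pout (st : option (pof_ty prop_in)) (x : pof_ty prop_in) : pof_ty prop_out :=
  match x with
  | inr (inr _) => match st with Some (inl a) => inl a | _ => inr tt end
  | _ => inr tt end.
Fixpoint prop_aux st (w : seq (pof_ty prop_in)) : seq (pof_ty prop_out) :=
  match w with [::] => [::] | x :: w' => pout st x :: prop_aux (upd st x) w' end.

Lemma prop_aux_gen p w :
  [seq prop_letter (p ++ w) i x | '(i, x) <- zip (iota (size p) (size w)) w]
  = prop_aux (last_non_eps (rev p)) w.
Proof.
elim: w p => [|x w IH] p //=.
have E := IH (rcons p x); rewrite cat_rcons size_rcons rev_rcons in E.
by rewrite E {E} /prop_letter take_size_cat.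
Qed.

Lemma prop_auxE w : atom_propagation w = prop_aux None w.
Proof. by rewrite /atom_propagation -(prop_aux_gen [::]). Qed.

Lemma prop_aux_pact g st w :
  prop_aux (omap (@pact g prop_in) st) (map (@pact g prop_in) w) = map (@pact g prop_out) (prop_aux st w).
Proof.
elim: w st => [|x w IH] st //=.
rewrite -IH; congr (_ :: _).
  by case: x => [a|[[]|[]]] //=; case: st => [[b|[[]|[]]]|].
by case: x => [a|[[]|[]]].
Qed.

Lemma size_prop_aux st w : size (prop_aux st w) = size w.
Proof. by elim: w st => //= x w IH st; rewrite IH. Qed.

Lemma size_mealy (Q X Y : Type) (d : Q -> X -> Q * Y) q w : size (mealy_run d q w) = size w.
Proof. elim: w q => //= x w IH q; by case: (d q x) => q' y /=; rewrite IH. Qed.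

Lemma cp_size ab S G (f : seq (pof_ty S) -> seq (pof_ty G)) :
  comp_primes ab f -> forall w, size (f w) = size w.
Proof.
elim=> {S G f}.
- by move=> S G h _ w; rewrite size_map.
- by move=> S G Q q0 d _ _ w; rewrite size_mealy.
- by move=> w; rewrite prop_auxE size_prop_aux.
- by move=> S D G f g _ Hf _ Hg w; rewrite Hg Hf.
- move=> S1 S2 G1 G2 f1 f2 _ H1 _ H2 w.
  by rewrite size_zip H1 H2 !size_map minnn.
Qed.

Lemma map_zip' (A B C D : Type) (f : A -> C) (g : B -> D) s t :
  map (fun p => (f p.1, g p.2)) (zip s t) = zip (map f s) (map g t).
Proof. by elim: s t => [|x s IH] [|y t] //=; rewrite IH. Qed.

Lemma eqv_inv S G (f : seq (pof_ty S) -> seq (pof_ty G)) (p : aut) w :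
  equivariant_str f -> f (map (@pact (aut_inv p) S) w) = map (@pact (aut_inv p) G) (f w).
Proof.
move=> H; rewrite -[in RHS](H p w) -map_comp [RHS](@eq_map _ _ _ id) ?map_id // => x /=.
by rewrite pact_comp pact_id // => a /=; rewrite aut_K.
Qed.

Lemma cp_eqv S G (f : seq (pof_ty S) -> seq (pof_ty G)) :
  comp_primes [::] f -> equivariant_str f.
Proof.
elim=> {S G f}.
- move=> S G h H p w; rewrite -!map_comp; apply: eq_map => x /=; exact: H.
- move=> S G Q q0 d hS hG p w.
  rewrite (eq_map (fun x => pact_atomless _ x hS)) map_id.
  by rewrite (eq_map (fun x => pact_atomless _ x hG)) map_id.
- move=> p w; rewrite !prop_auxE.
  have E := prop_aux_pact (aut_inv p) None w; simpl in E; rewrite E.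
  rewrite -map_comp (@eq_map _ _ _ id) ?map_id // => -[x|[]] //=; by rewrite aut_Ki.
- move=> S D G f g _ Hf _ Hg p w.
  by rewrite (eqv_inv p w Hf) Hg.
- move=> S1 S2 G1 G2 f1 f2 _ H1 _ H2 p w /=.
  have -> : unzip1 (map (@pact (aut_inv p) (PProd S1 S2)) w) = map (@pact (aut_inv p) S1) (unzip1 w).
    by rewrite /unzip1 -!map_comp.
  have -> : unzip2 (map (@pact (aut_inv p) (PProd S1 S2)) w) = map (@pact (aut_inv p) S2) (unzip2 w).
    by rewrite /unzip2 -!map_comp.
  rewrite (map_zip' (@pact (aut_fun p) G1) (@pact (aut_fun p) G2)).
  by rewrite H1 H2.
Qed.

Lemma pactK (p : aut) S (x : pof_ty S) : pact (aut_fun p) (@pact (aut_inv p) S x) = x.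
Proof. by rewrite pact_comp pact_id // => a /=; rewrite aut_Ki. Qed.

Section PropT.
Variable ab : seq atom.
Local Notation k := (size ab).

Definition Kp : pof := PSum (Tg k) (PSum PUnit (PSum PUnit PUnit)).
Definition Op : pof := PSum (Tg k) (PSum PUnit PUnit).

Definition strip (y : pof_ty (T k prop_in)) : pof_ty prop_in :=
  match y with
  | inl (inl a) => inl a
  | inl (inr _) => inr (inr tt)
  | inr e => inr e
  end.
Definition kind (y : pof_ty (T k prop_in)) : pof_ty Kp :=
  match y with
  | inl (inl _) => inr (inl tt)
  | inl (inr t) => inl t
  | inr (inl _) => inr (inr (inl tt))
  | inr (inr _) => inr (inr (inr tt))
  end.
Definition dM (q : option 'I_k.+1) (x : pof_ty Kp) : option 'I_k.+1 * pof_ty Op :=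
  match x with
  | inl t => (Some (inord (nat_of_tg t)), inr (inr tt))
  | inr (inl _) => (None, inr (inl tt))
  | inr (inr (inl _)) => (q, inr (inl tt))
  | inr (inr (inr _)) =>
      (None, match q with Some j => inl (tg_of k j) | None => inr (inl tt) end)
  end.
Definition comb (p : pof_ty (PProd prop_out Op)) : pof_ty (T k prop_out) :=
  match p.2 with
  | inl t => inl (inr t)
  | inr (inl _) => match p.1 with inl a => inl (inl a) | inr u => inr u end
  | inr (inr _) => inr tt
  end.
Definition dupT (x : pof_ty (T k prop_in)) : pof_ty (PProd (T k prop_in) (T k prop_in)) := (x, x).

Definition Fprop (w : seq (pof_ty (T k prop_in))) : seq (pof_ty (T k prop_out)) :=
  map comb (zip (atom_propagation (map strip (unzip1 (map dupT w))))
                (mealy_run dM None (map kind (unzip2 (map dupT w))))).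

Lemma Fprop_cp : comp_primes [::] Fprop.
Proof.
have Hdup : supported [::] dupT.
  move=> p _ x; exact: (f_equal2 pair (pactK p x) (pactK p x)).
have Hstrip : supported [::] strip.
  by move=> p _ [[a|t]|[[]|[]]] /=; rewrite ?aut_Ki.
have Hkind : supported [::] kind.
  by move=> p _ [[a|t]|[[]|[]]] /=; rewrite ?pact_Tg.
have Hcomb : supported [::] comb.
  move=> p _ [[a|[]] [t|[[]|[]]]] /=; by rewrite ?pact_Tg ?aut_Ki.
have aK : atomless Kp by rewrite /= atomless_Tg.
have aO : atomless Op by rewrite /= atomless_Tg.
exact: (CP_seq (CP_hom Hdup)
         (CP_seq (CP_par (CP_seq (CP_hom Hstrip) (CP_prop _))
                         (CP_seq (CP_hom Hkind) (@CP_mealy _ Kp Op _ None dM aK aO)))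
                 (CP_hom Hcomb))).
Qed.

Definition qof (st : option (pof_ty prop_in)) : option 'I_k.+1 :=
  match st with
  | Some (inl a) => if a \in ab then Some (inord (index a ab)) else None
  | _ => None
  end.

Lemma Fprop_inv (st : option (pof_ty prop_in)) (w : seq (pof_ty prop_in)) :
  map comb (zip (prop_aux (omap (strip \o @enc ab prop_in) st) (map (strip \o @enc ab prop_in) w))
                (mealy_run dM (qof st) (map (kind \o @enc ab prop_in) w)))
  = map (@enc ab prop_out) (prop_aux st w).
Proof.
have hk : forall a, a \in ab -> index a ab <= k by move=> a ha; apply: ltnW; rewrite index_mem.
elim: w st => [|x w IH] st //=.
case: x => [a|[[]|[]]] /=.
- case ha: (a \in ab) => /=.
  + rewrite nat_of_tgK ?hk //.
    have := IH (Some (inl a)); rewrite /= ha => <-.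
    done.
  + have := IH (Some (inl a)); rewrite /= ha => <-.
    case: st => [[b|[[]|[]]]|] //=.
- by rewrite -IH; case: st => [[b|[[]|[]]]|] //=.
- rewrite -(IH (Some (inr (inr tt)))) /=.
  case: st => [[b|[[]|[]]]|] //=.
  case hb: (b \in ab) => //=.
  by rewrite inordK ?ltnS ?hk.
Qed.

Lemma Fprop_enc (w : seq (pof_ty prop_in)) :
  Fprop (map (@enc ab prop_in) w) = map (@enc ab prop_out) (atom_propagation w).
Proof.
rewrite /Fprop.
have -> : unzip1 (map dupT (map (@enc ab prop_in) w)) = map (@enc ab prop_in) w.
  by elim: w => //= x w ->.
have -> : unzip2 (map dupT (map (@enc ab prop_in) w)) = map (@enc ab prop_in) w.
  by elim: w => //= x w ->.
by rewrite !prop_auxE -(Fprop_inv None w) -!map_comp.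
Qed.
End PropT.

Lemma translate ab (k0 : 0 < size ab) S G (f : seq (pof_ty S) -> seq (pof_ty G)) :
  comp_primes ab f ->
  exists F : seq (pof_ty (T (size ab) S)) -> seq (pof_ty (T (size ab) G)),
    comp_primes [::] F /\ forall w, F (map (@enc ab S) w) = map (@enc ab G) (f w).
Proof.
elim=> {S G f}.
- move=> S G h Hh; exists (map (hT h)); split; first exact: (CP_hom (hT_eqv k0 Hh)).
  move=> w; rewrite -!map_comp; apply: eq_map => x /=; exact: hT_enc.
- move=> S G Q q0 d hS hG.
  pose d' := fun q (y : pof_ty (T (size ab) S)) =>
    let: (q', g) := d q (dec (ab:=ab) y) in (q', @enc ab G g).
  exists (mealy_run d' q0); split; first by apply: CP_mealy; rewrite atomless_T.
  move=> w; elim: w q0 => //= x w IH q; rewrite /d' decK; case: (d q x) => q' g /=.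
  by rewrite -IH.
- exists (@Fprop ab); split; [exact: (@Fprop_cp ab) | exact: (@Fprop_enc ab)].
- move=> S D G f g _ [F1 [H1 E1]] _ [F2 [H2 E2]].
  exists (fun w => F2 (F1 w)); split; first exact: (CP_seq H1 H2).
  by move=> w; rewrite E1 E2.
- move=> S1 S2 G1 G2 f1 f2 _ [F1 [H1 E1]] _ [F2 [H2 E2]].
  exists (fun w => zip (F1 (unzip1 w)) (F2 (unzip2 w))); split; first exact: (CP_par H1 H2).
  move=> w.
  have -> : unzip1 (map (@enc ab (PProd S1 S2)) w) = map (@enc ab S1) (unzip1 w).
    by rewrite /unzip1 -!map_comp.
  have -> : unzip2 (map (@enc ab (PProd S1 S2)) w) = map (@enc ab S2) (unzip2 w).
    by rewrite /unzip2 -!map_comp.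
  by rewrite E1 E2 -map_zip'.
Qed.

Fixpoint pdef (S : pof) : pof_ty S :=
  match S return pof_ty S with
  | PAtom => 0
  | PUnit => tt
  | PProd A B => (pdef A, pdef B)
  | PSum A B => inl (pdef A)
  end.

Definition satoms (A : pof) (w : seq (pof_ty A)) := flatten (map (@atoms A) w).

Lemma satoms_pact g (A : pof) (w : seq (pof_ty A)) :
  satoms (map (@pact g A) w) = map g (satoms w).
Proof. elim: w => //= x w IH. by rewrite /satoms /= -/(satoms _) IH atoms_pact map_cat. Qed.

Lemma map_enc_embed ab (A : pof) (w : seq (pof_ty A)) :
  (forall a, a \in satoms w -> a \notin ab) -> map (@enc ab A) w = map (@embed (size ab) A) w.
Proof.
elim: w => //= x w IH H.
rewrite enc_embed ?IH // => a ha; apply: H; by rewrite /satoms /= mem_cat ha ?orbT.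
Qed.

Lemma key_embed (S G : pof) (f : seq (pof_ty S) -> seq (pof_ty G)) ab
  (F : seq (pof_ty (T (size ab) S)) -> seq (pof_ty (T (size ab) G))) :
  equivariant_str f -> equivariant_str F ->
  (forall w, F (map (@enc ab S) w) = map (@enc ab G) (f w)) ->
  forall w, F (map (@embed (size ab) S) w) = map (@embed (size ab) G) (f w).
Proof.
move=> Hf HF EF w.
set M := (maxl (ab ++ satoms w ++ satoms (f w))).+1.
pose b := aut_invol (blockf_inv M).
have big : forall a, a < M -> forall c, c \in ab -> blockf M a != c.
  move=> a ha c hc; rewrite /blockf ha; apply/negP => /eqP E.
  have : c < M by rewrite ltnS maxl_ge // mem_cat hc.
  by rewrite -E ltnNge leq_addl.
have E1 : map (@enc ab S) (map (@pact (aut_inv b) S) w) = map (@embed (size ab) S) (map (@pact (aut_inv b) S) w).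
  apply: map_enc_embed => a; rewrite satoms_pact => /mapP[c hc ->]; apply/negP => hab.
  have : c < M by rewrite ltnS maxl_ge // !mem_cat hc orbT.
  by move/big => /(_ _ hab); rewrite eqxx.
have E2 : map (@enc ab G) (map (@pact (aut_inv b) G) (f w)) = map (@embed (size ab) G) (map (@pact (aut_inv b) G) (f w)).
  apply: map_enc_embed => a; rewrite satoms_pact => /mapP[c hc ->]; apply/negP => hab.
  have : c < M by rewrite ltnS maxl_ge // !mem_cat hc !orbT.
  by move/big => /(_ _ hab); rewrite eqxx.
have E3 : map (@pact (aut_inv b) (T (size ab) S)) (map (@embed (size ab) S) w) = map (@embed (size ab) S) (map (@pact (aut_inv b) S) w).
  by rewrite -!map_comp; apply: eq_map => x /=; rewrite embed_pact.
rewrite -(HF b) E3 -E1 EF (eqv_inv b w Hf) E2.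
rewrite -!map_comp; apply: eq_map => x.
by rewrite /comp -embed_pact (pactK b x).
Qed.

Lemma map_rho_zip (A A' B : Type) (e : A -> A') (r : A' * B -> A) s t :
  (forall x y, r (e x, y) = x) -> size s = size t -> map r (zip (map e s) t) = s.
Proof.
move=> H; elim: s t => [|x s IH] [|y t] //= [E]. by rewrite H IH.
Qed.

Theorem mainTheorem10 (S G : pof) (f : seq (pof_ty S) -> seq (pof_ty G)) (abar : seq atom) :
  equivariant_str f -> comp_primes abar f -> comp_primes [::] f.
Proof.
move=> Hf Hc.
case: (posnP (size abar)) => [/size0nil E | k0]; first by rewrite E in Hc.
have [F [HF EF]] := translate k0 Hc.
have KE := key_embed Hf (cp_eqv HF) EF.
have one : forall s, exists g, f [:: s] = [:: g].
  move=> s; have := cp_size Hc [:: s]; case: (f [:: s]) => [|g [|? ?]] //=.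
  by exists g.
pose k := size abar.
pose dup2 := fun x : pof_ty S => ((@embed k S x, x) : pof_ty (PProd (T k S) S)).
pose rho := fun p : pof_ty (PProd (T k G) S) =>
  match @unembed k G p.1 with Some g => g | None => nth (pdef G) (f [:: p.2]) 0 end.
have Hdup : supported [::] dup2.
  move=> p _ x; rewrite /dup2 /=.
  exact: (f_equal2 pair (etrans (f_equal _ (embed_pact _ _ _)) (pactK p _)) (pactK p x)).
have Hid : supported [::] (@id (pof_ty S)).
  by move=> p _ x; rewrite /= pactK.
have Hrho : supported [::] rho.
  move=> p _ [y s]; rewrite /rho.
  change (pact (aut_fun p) (match unembed (pact (aut_inv p) y) with Some g => g
     | None => nth (pdef G) (f [:: pact (aut_inv p) s]) 0 end) =
     match unembed y with Some g => g | None => nth (pdef G) (f [:: s]) 0 end).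
  rewrite unembed_pact; case: (unembed y) => [g|] /=; first exact: pactK.
  have -> : [:: pact (aut_inv p) s] = map (@pact (aut_inv p) S) [:: s] by [].
  rewrite (eqv_inv p _ Hf); have [g ->] := one s; exact: pactK.
have Hcp := CP_seq (CP_hom Hdup) (CP_seq (CP_par HF (CP_hom Hid)) (CP_hom Hrho)).
suff -> : f = (fun w => map rho (zip (F (unzip1 (map dup2 w))) (map id (unzip2 (map dup2 w))))).
  exact: Hcp.
apply: functional_extensionality => w.
have -> : unzip1 (map dup2 w) = map (@embed k S) w by elim: w {Hcp} => //= x w ->.
have -> : unzip2 (map dup2 w) = w by elim: w {Hcp} => //= x w ->.
rewrite map_id KE (@map_rho_zip (pof_ty G) (pof_ty (T k G)) (pof_ty S) (@embed k G) rho) //; last by rewrite (cp_size Hc).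
by move=> x y; rewrite /rho /= embedK.
Qed.
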